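(* Let $G$ be a 2-connected graph on $n\ge 4$ vertices, and let $p$ be the length of a longest path in $G$. Then there is a bond of $G$ meeting every path of $G$ of length at least $p-1$.
   Context: All graphs are finite, simple and undirected. The length of a path is its number of edges. A bond of $G$ is a minimal nonempty edge-cut, where an edge-cut is a set of edges of the form $\{xy\in E(G): x\in X, y\in V(G)\setminus X\}$ for some $X\subseteq V(G)$. A set of edges meets a path if the path contains at least one edge of the set. *)

(* Defs.v *)
From mathcomp Require Import all_boot.
Set Implicit Arguments. Unset Strict Implicit. Unset Printing Implicit Defensive.

(* A finite simple graph: vertex type T : finType, adjacency e : rel T
   (assumed symmetric and irreflexive in the theorem).
   Edges are represented as 2-element vertex sets {x, y}. *)

Section Graph.
Variables (T : finType) (e : rel T).

Definition del_rel (v : T) : rel T := [rel a b | [&& e a b, a != v & b != v]].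

Definition connected_graph : Prop := forall x y : T, connect e x y.

Definition two_connected : Prop :=
  2 < #|T| /\ connected_graph /\
  forall v x y : T, x != v -> y != v -> connect (del_rel v) x y.

Definition edge_cut (X : {set T}) : {set {set T}} :=
  [set [set x; y] | x in X, y in ~: X & e x y].

Definition is_edge_cut (F : {set {set T}}) : Prop := exists X, F = edge_cut X.

Definition is_bond (F : {set {set T}}) : Prop :=
  is_edge_cut F /\ F != set0 /\
  forall F', is_edge_cut F' -> F' != set0 -> F' \subset F -> F' = F.

Definition is_gpath (s : seq T) : bool :=
  if s is x :: p then path e x p && uniq s else false.

Definition plen (s : seq T) : nat := (size s).-1.

Definition path_edges (s : seq T) : seq {set T} :=
  [seq [set ab.1; ab.2] | ab <- zip s (behead s)].

Definition meets (F : {set {set T}}) (s : seq T) : bool :=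
  has (fun f => f \in F) (path_edges s).

Definition longest_path_length (p : nat) : Prop :=
  (exists s, is_gpath s /\ plen s = p) /\
  (forall s, is_gpath s -> plen s <= p).

End Graph.

(* Main.v *)
Require Import Defs.
From mathcomp Require Import all_boot.
From Stdlib Require Import Classical.
From mathcomp Require Import zify.
Set Implicit Arguments. Unset Strict Implicit. Unset Printing Implicit Defensive.

Section Main.
Variables (T : finType) (e : rel T).
Hypothesis esym : symmetric e.
Hypothesis eirr : irreflexive e.

Definition walk (s : seq T) : bool := if s is x :: s' then path e x s' else true.

Lemma gpathE s : is_gpath e s = (s != [::]) && walk s && uniq s.
Proof. by case: s. Qed.

Lemma walk_glue s1 v s2 : walk (rcons s1 v) -> walk (v :: s2) -> walk (s1 ++ v :: s2).
Proof.
case: s1 => [|x s1] //= H1 H2.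
by rewrite cat_path /= H2 andbT; rewrite rcons_path in H1.
Qed.

Lemma walk_rev s : walk (rev s) = walk s.
Proof.
have H : forall s, walk s -> walk (rev s).
  case=> [|x s'] //= H.
  rewrite (lastI x s') rev_rcons /= rev_path.
  by rewrite (eq_path (e' := e)) // => a b; rewrite esym.
by apply/idP/idP => /H //; rewrite revK.
Qed.

Lemma walk_catl s1 s2 : walk (s1 ++ s2) -> walk s1.
Proof. by case: s1 => [|x s1] //= ; rewrite cat_path => /andP[]. Qed.

Lemma walk_catr s1 s2 : walk (s1 ++ s2) -> walk s2.
Proof.
case: s1 => [|x s1] //=; rewrite cat_path => /andP[_].
by case: s2 => [|y s2] //= /andP[].
Qed.

Lemma walk_mid s1 s2 s3 : walk (s1 ++ s2 ++ s3) -> walk s2.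
Proof. by move/walk_catr/walk_catl. Qed.

Lemma uniq_sub (t s : seq T) : uniq t -> (forall z, count_mem z s <= count_mem z t) -> uniq s.
Proof.
move=> Ut H; apply: count_mem_uniq; move=> z.
have := H z; rewrite (count_uniq_mem z Ut).
case: (boolP (z \in s)) => zs.
  have : count_mem z s != 0 by apply/eqP => /count_memPn; rewrite zs.
  by case: (z \in t) => /=; lia.
by move=> _; apply/count_memPn.
Qed.

Lemma CL_aux (r : rel T) (X Z : pred T) s : forall x pre,
  X x -> (forall v, v \in pre -> ~~ X v && ~~ Z v) -> (forall v, X v -> Z v -> False) ->
  path r x (pre ++ s) -> Z (last x (pre ++ s)) ->
  exists x' z k, [/\ X x', Z z, path r x' (rcons k z) & (forall v, v \in k -> ~~ X v && ~~ Z v)].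
Proof.
elim: s => [|y s IH] x pre Xx Hpre Hd.
  rewrite cats0; case/lastP: pre Hpre => [|pre w] Hpre _ /=.
    by move=> Zx; case: (Hd x).
  by rewrite last_rcons => Zw; have := Hpre w; rewrite mem_rcons mem_head Zw andbF => /(_ isT).
move=> Hp HZ.
case: (boolP (Z y)) => Zy.
  exists x, y, pre; split => //.
  by move: Hp; rewrite -cat_rcons cat_path => /andP[].
case: (boolP (X y)) => Xy.
  apply: (IH y [::]) => //.
  by move: Hp; rewrite -cat_rcons cat_path last_rcons => /andP[].
  by move: HZ; rewrite -cat_rcons last_cat last_rcons.
apply: (IH x (rcons pre y)) => //.
  by move=> v; rewrite mem_rcons inE => /orP[/eqP->|/Hpre //]; rewrite Xy Zy.
  by rewrite cat_rcons.
  by rewrite cat_rcons.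
Qed.

Lemma CL (r : rel T) (X Z : pred T) x0 z0 : X x0 -> Z z0 -> connect r x0 z0 ->
  (forall v, X v -> Z v -> False) ->
  exists x z k, [/\ X x, Z z, path r x (rcons k z), uniq (x :: rcons k z)
    & (forall v, v \in k -> ~~ X v && ~~ Z v)].
Proof.
move=> Xx0 Zz0 /connectP[s Hs Ez] Hd.
have HZ : Z (last x0 ([::] ++ s)) by rewrite -Ez.
have Hnil : forall v, v \in [::] -> ~~ X v && ~~ Z v by [].
have [x [z [k [Xx Zz Hp Hk]]]] := CL_aux Xx0 Hnil Hd Hs HZ.
have := last_rcons x k z.
case: (shortenP Hp) => p' Hp' Up' Sub' Elast.
case/lastP: p' Hp' Up' Sub' Elast => [|k' z'] Hp' Up' Sub' Elast.
  by move: Elast => /= Exz; subst; case: (Hd z).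
rewrite last_rcons in Elast; subst z'.
exists x, z, k'; split => // v vk.
have : v \in rcons k z by apply: Sub'; rewrite mem_rcons inE vk orbT.
rewrite mem_rcons inE => /orP[/eqP Evz|]; last by apply: Hk.
subst v; move: Up'; rewrite /= rcons_uniq vk /= andbF //.
Qed.



Ltac lnorm := repeat (first [rewrite rev_cat | rewrite rev_cons | rewrite rev_rcons
  | rewrite revK | rewrite cat0s | rewrite cats0 | rewrite -cats1 | rewrite -catA | rewrite cat_cons ]); simpl.
Ltac cnt := repeat (first [rewrite count_cat | rewrite count_rev | progress simpl]).
Ltac szn := repeat (first [rewrite size_cat | rewrite size_rev | progress simpl]).
Ltac genb := repeat match goal with |- context [nat_of_bool ?b] =>
  let n := fresh "n" in generalize (nat_of_bool b) as n; intros n end.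
Ltac clearall := repeat match goal with H : _ |- _ => clear H end.
Ltac cntlia := move=> z; cnt; simpl; genb; clearall; lia.
Ltac clean := repeat match goal with
  | H : is_true ?b |- _ => lazymatch b with | leq _ _ => fail | _ => clear H end
  | H : _ = _ :> seq _ |- _ => clear H
  | H : forall _, _ |- _ => clear H end.
Ltac slia := clean; simpl in *; lia.

Lemma walk_sub s a b c : walk s -> s = a ++ b ++ c -> walk b.
Proof. by move=> W E; subst s; apply: walk_mid W. Qed.

Lemma walk_subr s a b c : walk s -> s = a ++ rev b ++ c -> walk b.
Proof. by move=> W E; subst s; rewrite -walk_rev; apply: walk_mid W. Qed.

Lemma walk_glue' s s1 v s2 : walk (rcons s1 v) -> walk (v :: s2) -> s = s1 ++ v :: s2 -> walk s.
Proof. by move=> W1 W2 ->; apply: walk_glue. Qed.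

Lemma uniq_catI (a b : seq T) : uniq a -> uniq b -> (forall z, z \in a -> z \in b -> False) -> uniq (a ++ b).
Proof.
move=> Ua Ub D; rewrite cat_uniq Ua Ub andbT /=; apply/hasPn => z zb; apply/negP => za.
exact: D za zb.
Qed.

Variable p : nat.
Hypothesis Hlong : forall s, is_gpath e s -> plen s <= p.

Lemma mk_len s : s != [::] -> walk s -> uniq s -> (size s).-1 <= p.
Proof. by move=> H1 H2 H3; apply: (Hlong (s:=s)); rewrite gpathE H1 H2 H3. Qed.

Section Sum.
Variables (q r k1 k2 : seq T) (x1 x2 y1 y2 : T).
Hypotheses (Wq : walk q) (Uq : uniq q) (Wr : walk r) (Ur : uniq r)
  (Dqr : forall z, z \in q -> z \in r -> False)
  (Wk1 : walk (x1 :: rcons k1 y1)) (Uk1 : uniq (k1 ++ q ++ r))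
  (Wk2 : walk (x2 :: rcons k2 y2)) (Uk2 : uniq (k2 ++ q ++ r)).

Lemma sum_lt m1 m2 m3 n1 n2 n3 : q = m1 ++ x1 :: m2 ++ x2 :: m3 ->
  r = n1 ++ y1 :: n2 ++ y2 :: n3 \/ r = n1 ++ y2 :: n2 ++ y1 :: n3 ->
  (size q).-1 + (size r).-1 + 3 <= 2 * p.
Proof.
move=> Eq [] Er.
- have HX : (size (m1 ++ x1 :: m2 ++ x2 :: k2 ++ y2 :: rev n2 ++ y1 :: rev n1)).-1 <= p.
    apply: mk_len; first by case: (m1).
      apply: (walk_glue' (s1 := m1 ++ x1 :: m2) (v := x2) (s2 := k2 ++ y2 :: rev n2 ++ y1 :: rev n1)); last by lnorm.
      - by apply: (walk_sub (a := [::]) (c := m3) Wq); rewrite Eq; lnorm.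
      apply: (walk_glue' (s1 := x2 :: k2) (v := y2) (s2 := rev n2 ++ y1 :: rev n1)) => //.
      by apply: (walk_subr (a := [::]) (c := n3) Wr); rewrite Er; lnorm.
    apply: (uniq_sub Uk2); rewrite Eq Er; lnorm; cntlia.
  have HY : (size (rev m3 ++ x2 :: rev m2 ++ x1 :: k1 ++ y1 :: n2 ++ y2 :: n3)).-1 <= p.
    apply: mk_len; first by case: (rev m3).
      apply: (walk_glue' (s1 := rev m3 ++ x2 :: rev m2) (v := x1) (s2 := k1 ++ y1 :: n2 ++ y2 :: n3)); last by lnorm.
      - by apply: (walk_subr (a := m1) (c := [::]) Wq); rewrite Eq; lnorm.
      apply: (walk_glue' (s1 := x1 :: k1) (v := y1) (s2 := n2 ++ y2 :: n3)) => //.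
      by apply: (walk_sub (a := n1) (c := [::]) Wr); rewrite Er; lnorm.
    apply: (uniq_sub Uk1); rewrite Eq Er; lnorm; cntlia.
  move: HX HY; rewrite Eq Er; szn; lia.
- have HX : (size (m1 ++ x1 :: m2 ++ x2 :: k2 ++ y2 :: n2 ++ y1 :: n3)).-1 <= p.
    apply: mk_len; first by case: (m1).
      apply: (walk_glue' (s1 := m1 ++ x1 :: m2) (v := x2) (s2 := k2 ++ y2 :: n2 ++ y1 :: n3)); last by lnorm.
      - by apply: (walk_sub (a := [::]) (c := m3) Wq); rewrite Eq; lnorm.
      apply: (walk_glue' (s1 := x2 :: k2) (v := y2) (s2 := n2 ++ y1 :: n3)) => //.
      by apply: (walk_sub (a := n1) (c := [::]) Wr); rewrite Er; lnorm.
    apply: (uniq_sub Uk2); rewrite Eq Er; lnorm; cntlia.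
  have HY : (size (rev m3 ++ x2 :: rev m2 ++ x1 :: k1 ++ y1 :: rev n2 ++ y2 :: rev n1)).-1 <= p.
    apply: mk_len; first by case: (rev m3).
      apply: (walk_glue' (s1 := rev m3 ++ x2 :: rev m2) (v := x1) (s2 := k1 ++ y1 :: rev n2 ++ y2 :: rev n1)); last by lnorm.
      - by apply: (walk_subr (a := m1) (c := [::]) Wq); rewrite Eq; lnorm.
      apply: (walk_glue' (s1 := x1 :: k1) (v := y1) (s2 := rev n2 ++ y2 :: rev n1)) => //.
      by apply: (walk_subr (a := [::]) (c := n3) Wr); rewrite Er; lnorm.
    apply: (uniq_sub Uk1); rewrite Eq Er; lnorm; cntlia.
  move: HX HY; rewrite Eq Er; szn; lia.
Qed.

Lemma sum_eq m1 m3 n1 n2 n3 : x2 = x1 -> q = m1 ++ x1 :: m3 ->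
  r = n1 ++ y1 :: n2 ++ y2 :: n3 ->
  (size q).-1 + (size r).-1 + 3 <= 2 * p.
Proof.
move=> Ex Eq Er; subst x2.
have HX : (size (m1 ++ x1 :: k2 ++ y2 :: rev n2 ++ y1 :: rev n1)).-1 <= p.
  apply: mk_len; first by case: (m1).
    apply: (walk_glue' (s1 := m1) (v := x1) (s2 := k2 ++ y2 :: rev n2 ++ y1 :: rev n1)); last by lnorm.
    - by apply: (walk_sub (a := [::]) (c := m3) Wq); rewrite Eq; lnorm.
    apply: (walk_glue' (s1 := x1 :: k2) (v := y2) (s2 := rev n2 ++ y1 :: rev n1)) => //.
    by apply: (walk_subr (a := [::]) (c := n3) Wr); rewrite Er; lnorm.
  apply: (uniq_sub Uk2); rewrite Eq Er; lnorm; cntlia.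
have HY : (size (rev m3 ++ x1 :: k1 ++ y1 :: n2 ++ y2 :: n3)).-1 <= p.
  apply: mk_len; first by case: (rev m3).
    apply: (walk_glue' (s1 := rev m3) (v := x1) (s2 := k1 ++ y1 :: n2 ++ y2 :: n3)); last by lnorm.
    - by apply: (walk_subr (a := m1) (c := [::]) Wq); rewrite Eq; lnorm.
    apply: (walk_glue' (s1 := x1 :: k1) (v := y1) (s2 := n2 ++ y2 :: n3)) => //.
    by apply: (walk_sub (a := n1) (c := [::]) Wr); rewrite Er; lnorm.
  apply: (uniq_sub Uk1); rewrite Eq Er; lnorm; cntlia.
move: HX HY; rewrite Eq Er; szn; lia.
Qed.
End Sum.

Lemma splitE (s : seq T) x : x \in s -> exists s1 s2, s = s1 ++ x :: s2.
Proof. by case/splitPr => s1 s2; exists s1, s2. Qed.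

Lemma split2 (s : seq T) a b : a \in s -> b \in s -> a != b ->
  exists m1 m2 m3, s = m1 ++ a :: m2 ++ b :: m3 \/ s = m1 ++ b :: m2 ++ a :: m3.
Proof.
case/splitPr => s1 s2; rewrite mem_cat inE => /orP[bs1|/orP[/eqP->|bs2]] nab.
- case/splitPr: bs1 => t1 t2; exists t1, t2, s2; right; lnorm; by [].
- by rewrite eqxx in nab.
- case/splitPr: bs2 => t1 t2; exists s1, t1, t2; left; by [].
Qed.

Lemma sum_all q r k1 k2 x1 x2 y1 y2 :
  walk q -> uniq q -> walk r -> uniq r -> (forall z, z \in q -> z \in r -> False) ->
  walk (x1 :: rcons k1 y1) -> uniq (k1 ++ q ++ r) ->
  walk (x2 :: rcons k2 y2) -> uniq (k2 ++ q ++ r) ->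
  x1 \in q -> x2 \in q -> y1 \in r -> y2 \in r -> y1 != y2 ->
  (size q).-1 + (size r).-1 + 3 <= 2 * p.
Proof.
move=> Wq Uq Wr Ur D W1 U1 W2 U2 x1q x2q y1r y2r ny.
have [n1 [n2 [n3 Er]]] := split2 y1r y2r ny.
case: (eqVneq x1 x2) => [Ex|nx].
- subst x2; have [m1 [m3 Eq]] := splitE x1q.
  case: Er => Er.
  + by eapply (@sum_eq q r k1 k2 x1 x1 y1 y2); eauto.
  + by eapply (@sum_eq q r k2 k1 x1 x1 y2 y1); eauto.
- have [m1 [m2 [m3 [Eq|Eq]]]] := split2 x1q x2q nx.
  + have Er' : r = n1 ++ y1 :: n2 ++ y2 :: n3 \/ r = n1 ++ y2 :: n2 ++ y1 :: n3 by [].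
    by eapply (@sum_lt q r k1 k2 x1 x2 y1 y2); eauto.
  + have Er' : r = n1 ++ y2 :: n2 ++ y1 :: n3 \/ r = n1 ++ y1 :: n2 ++ y2 :: n3 by case: Er; [right|left].
    by eapply (@sum_lt q r k2 k1 x2 x1 y2 y1); eauto.
Qed.

Section OV.
Variables (u : T) (q1 q2 r1 r2 : seq T).
Hypotheses (Wq : walk (q1 ++ u :: q2)) (Wr : walk (r1 ++ u :: r2))
  (Uqr : uniq (q1 ++ u :: q2 ++ r1 ++ r2)).

Lemma ov_F0 : size q2 + size r2 <= p.
Proof.
have H : (size (rev q2 ++ u :: r2)).-1 <= p.
  apply: mk_len; first by case: (rev q2).
    apply: (walk_glue' (s1 := rev q2) (v := u) (s2 := r2)); last by [].
    - by apply: (walk_subr (a := q1) (c := [::]) Wq); lnorm.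
    - by apply: (walk_sub (a := r1) (c := [::]) Wr); lnorm.
  by apply: (uniq_sub Uqr); cntlia.
by move: H; szn; lia.
Qed.

Section K.
Variables (x y : T) (k q21 q22 r21 r22 : seq T).
Hypotheses (Eq2 : q2 = q21 ++ x :: q22) (Er2 : r2 = r21 ++ y :: r22)
  (Wk : walk (x :: rcons k y)) (Uk : uniq (k ++ q1 ++ u :: q2 ++ r1 ++ r2)).

Lemma ov_L1 : size q22 + size k + size r21 + size r1 + 2 <= p.
Proof.
have H : (size (rev q22 ++ x :: k ++ y :: rev r21 ++ u :: rev r1)).-1 <= p.
  apply: mk_len; first by case: (rev q22).
    apply: (walk_glue' (s1 := rev q22) (v := x) (s2 := k ++ y :: rev r21 ++ u :: rev r1)); last by [].
    - by apply: (walk_subr (a := q1 ++ u :: q21) (c := [::]) Wq); rewrite Eq2; lnorm.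
    apply: (walk_glue' (s1 := x :: k) (v := y) (s2 := rev r21 ++ u :: rev r1)) => //.
    by apply: (walk_subr (a := [::]) (c := r22) Wr); rewrite Er2; lnorm.
  by apply: (uniq_sub Uk); rewrite Eq2 Er2; lnorm; cntlia.
by move: H; szn; lia.
Qed.

Lemma ov_L2 : size r1 + size q21 + size k + size r22 + 2 <= p.
Proof.
have H : (size (r1 ++ u :: q21 ++ x :: k ++ y :: r22)).-1 <= p.
  apply: mk_len; first by case: (r1).
    apply: (walk_glue' (s1 := r1) (v := u) (s2 := q21 ++ x :: k ++ y :: r22)); last by [].
    - by apply: (walk_sub (a := [::]) (c := r2) Wr); lnorm.
    apply: (walk_glue' (s1 := u :: q21) (v := x) (s2 := k ++ y :: r22)); last by lnorm.
    - by apply: (walk_sub (a := q1) (c := q22) Wq); rewrite Eq2; lnorm.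
    apply: (walk_glue' (s1 := x :: k) (v := y) (s2 := r22)) => //.
    by apply: (walk_sub (a := r1 ++ u :: r21) (c := [::]) Wr); rewrite Er2; lnorm.
  by apply: (uniq_sub Uk); rewrite Eq2 Er2; lnorm; cntlia.
by move: H; szn; lia.
Qed.

End K.

Section PT.
Variables (x1 x2 : T) (tin q11 q12 q21 q22 : seq T).
Hypotheses (Eq1 : q1 = q11 ++ x1 :: q12) (Eq2 : q2 = q21 ++ x2 :: q22)
  (Wt : walk (x1 :: rcons tin x2)) (Ut : uniq (tin ++ q1 ++ u :: q2 ++ r1 ++ r2)).

Lemma ov_PT : size q11 + size tin + size q21 + size r2 + 2 <= p.
Proof.
have H : (size (q11 ++ x1 :: tin ++ x2 :: rev q21 ++ u :: r2)).-1 <= p.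
  apply: mk_len; first by case: (q11).
    apply: (walk_glue' (s1 := q11) (v := x1) (s2 := tin ++ x2 :: rev q21 ++ u :: r2)); last by [].
    - by apply: (walk_sub (a := [::]) (c := q12 ++ u :: q2) Wq); rewrite Eq1; lnorm.
    apply: (walk_glue' (s1 := x1 :: tin) (v := x2) (s2 := rev q21 ++ u :: r2)); last by lnorm.
    - by [].
    apply: (walk_glue' (s1 := x2 :: rev q21) (v := u) (s2 := r2)); last by lnorm.
    - by apply: (walk_subr (a := q1) (c := q22) Wq); rewrite Eq2; lnorm.
    by apply: (walk_sub (a := r1) (c := [::]) Wr); lnorm.
  by apply: (uniq_sub Ut); rewrite Eq1 Eq2; lnorm; cntlia.
by move: H; szn; lia.
Qed.
End PT.

Section FF.
Variables (x y x1 x2 : T) (k q11 q12 r21 r22 : seq T).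
Hypotheses (Eq1 : q1 = q11 ++ x1 :: q12) (Er2 : r2 = r21 ++ y :: r22)
  (Wk : walk (x :: rcons k y)) (Uk : uniq (k ++ q1 ++ u :: q2 ++ r1 ++ r2))
  (E12 : e x1 x2).

Lemma ov_Fa m1 m2 m3 : q2 = m1 ++ x2 :: m2 ++ x :: m3 ->
  size r1 + size q12 + size m2 + size k + size r22 + 4 <= p.
Proof.
move=> Eq2.
have H : (size (r1 ++ u :: rev q12 ++ x1 :: x2 :: m2 ++ x :: k ++ y :: r22)).-1 <= p.
  apply: mk_len; first by case: (r1).
    apply: (walk_glue' (s1 := r1) (v := u) (s2 := rev q12 ++ x1 :: x2 :: m2 ++ x :: k ++ y :: r22)); last by [].
    - by apply: (walk_sub (a := [::]) (c := r2) Wr); lnorm.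
    apply: (walk_glue' (s1 := u :: rev q12) (v := x1) (s2 := x2 :: m2 ++ x :: k ++ y :: r22)); last by lnorm.
    - by apply: (walk_subr (a := q11) (c := q2) Wq); rewrite Eq1; lnorm.
    apply: (walk_glue' (s1 := [:: x1]) (v := x2) (s2 := m2 ++ x :: k ++ y :: r22)); last by lnorm.
    - by rewrite /= E12.
    apply: (walk_glue' (s1 := x2 :: m2) (v := x) (s2 := k ++ y :: r22)); last by lnorm.
    - by apply: (walk_sub (a := q1 ++ u :: m1) (c := m3) Wq); rewrite Eq2; lnorm.
    apply: (walk_glue' (s1 := x :: k) (v := y) (s2 := r22)) => //.
    by apply: (walk_sub (a := r1 ++ u :: r21) (c := [::]) Wr); rewrite Er2; lnorm.
  by apply: (uniq_sub Uk); rewrite Eq1 Eq2 Er2; lnorm; cntlia.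
by move: H; szn; lia.
Qed.

Lemma ov_Fb m1 m2 m3 : q2 = m1 ++ x :: m2 ++ x2 :: m3 ->
  size r1 + size q12 + size m2 + size k + size r22 + 4 <= p.
Proof.
move=> Eq2.
have H : (size (r1 ++ u :: rev q12 ++ x1 :: x2 :: rev m2 ++ x :: k ++ y :: r22)).-1 <= p.
  apply: mk_len; first by case: (r1).
    apply: (walk_glue' (s1 := r1) (v := u) (s2 := rev q12 ++ x1 :: x2 :: rev m2 ++ x :: k ++ y :: r22)); last by [].
    - by apply: (walk_sub (a := [::]) (c := r2) Wr); lnorm.
    apply: (walk_glue' (s1 := u :: rev q12) (v := x1) (s2 := x2 :: rev m2 ++ x :: k ++ y :: r22)); last by lnorm.
    - by apply: (walk_subr (a := q11) (c := q2) Wq); rewrite Eq1; lnorm.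
    apply: (walk_glue' (s1 := [:: x1]) (v := x2) (s2 := rev m2 ++ x :: k ++ y :: r22)); last by lnorm.
    - by rewrite /= E12.
    apply: (walk_glue' (s1 := x2 :: rev m2) (v := x) (s2 := k ++ y :: r22)); last by lnorm.
    - by apply: (walk_subr (a := q1 ++ u :: m1) (c := m3) Wq); rewrite Eq2; lnorm.
    apply: (walk_glue' (s1 := x :: k) (v := y) (s2 := r22)) => //.
    by apply: (walk_sub (a := r1 ++ u :: r21) (c := [::]) Wr); rewrite Er2; lnorm.
  by apply: (uniq_sub Uk); rewrite Eq1 Eq2 Er2; lnorm; cntlia.
by move: H; szn; lia.
Qed.

Lemma ov_Fc m1 m3 : x2 = x -> q2 = m1 ++ x :: m3 ->
  size r1 + size q12 + size k + size r22 + 3 <= p.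
Proof.
move=> Ex Eq2; subst x2.
have H : (size (r1 ++ u :: rev q12 ++ x1 :: x :: k ++ y :: r22)).-1 <= p.
  apply: mk_len; first by case: (r1).
    apply: (walk_glue' (s1 := r1) (v := u) (s2 := rev q12 ++ x1 :: x :: k ++ y :: r22)); last by [].
    - by apply: (walk_sub (a := [::]) (c := r2) Wr); lnorm.
    apply: (walk_glue' (s1 := u :: rev q12) (v := x1) (s2 := x :: k ++ y :: r22)); last by lnorm.
    - by apply: (walk_subr (a := q11) (c := q2) Wq); rewrite Eq1; lnorm.
    apply: (walk_glue' (s1 := [:: x1]) (v := x) (s2 := k ++ y :: r22)); last by lnorm.
    - by rewrite /= E12.
    apply: (walk_glue' (s1 := x :: k) (v := y) (s2 := r22)) => //.
    by apply: (walk_sub (a := r1 ++ u :: r21) (c := [::]) Wr); rewrite Er2; lnorm.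
  by apply: (uniq_sub Uk); rewrite Eq1 Eq2 Er2; lnorm; cntlia.
by move: H; szn; lia.
Qed.
End FF.
End OV.

Lemma walk_revQ u (q1 q2 : seq T) : walk (q1 ++ u :: q2) -> walk (rev q2 ++ u :: rev q1).
Proof. by move=> W; rewrite -walk_rev; move: W; lnorm. Qed.

Lemma walk_revK x y (k : seq T) : walk (x :: rcons k y) -> walk (y :: rcons (rev k) x).
Proof. by move=> W; rewrite -walk_rev; move: W; lnorm. Qed.

Lemma ov_i u q1 q2 r1 r2 x y k x1 x2 tin :
  walk (q1 ++ u :: q2) -> walk (r1 ++ u :: r2) -> uniq (q1 ++ u :: q2 ++ r1 ++ r2) ->
  p.-1 <= size q1 + size q2 -> p.-1 <= size r1 + size r2 ->
  x \in q2 -> y \in r2 -> walk (x :: rcons k y) -> uniq (k ++ q1 ++ u :: q2 ++ r1 ++ r2) ->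
  x1 \in q1 -> x2 \in q2 -> walk (x1 :: rcons tin x2) -> uniq (tin ++ q1 ++ u :: q2 ++ r1 ++ r2) ->
  False.
Proof.
move=> Wq Wr Uqr Hq Hr xq2 yr2 Wk Uk x1q1 x2q2 Wt Ut.
have [q11 [q12 Eq1]] := splitE x1q1.
have [r21 [r22 Er2]] := splitE yr2.
have WqR := walk_revQ Wq.
have WrR := walk_revQ Wr.
have UqrQ : uniq (rev q2 ++ u :: rev q1 ++ r1 ++ r2) by apply: (uniq_sub Uqr); cntlia.
have UqrR : uniq (q1 ++ u :: q2 ++ rev r2 ++ rev r1) by apply: (uniq_sub Uqr); cntlia.
have UqrQR : uniq (rev q2 ++ u :: rev q1 ++ rev r2 ++ rev r1) by apply: (uniq_sub Uqr); cntlia.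
have WtR := walk_revK Wt.
have Eq2' : rev q1 = rev q12 ++ x1 :: rev q11 by rewrite Eq1; lnorm.
have PTs : forall q21 q22, q2 = q21 ++ x2 :: q22 ->
  [/\ size q11 + size tin + size q21 + size r2 + 2 <= p,
      size q11 + size tin + size q21 + size r1 + 2 <= p,
      size q22 + size tin + size q12 + size r2 + 2 <= p,
      size q22 + size tin + size q12 + size r1 + 2 <= p &
      size q2 = size q21 + size q22 + 1].
  move=> q21 q22 Eq2; split.
  - exact: (ov_PT Wq Wr Uqr Eq1 Eq2 Wt Ut).
  - have := ov_PT Wq WrR UqrR Eq1 Eq2 Wt.
    rewrite size_rev; apply; by apply: (uniq_sub Ut); cntlia.
  - have Eq1' : rev q2 = rev q22 ++ x2 :: rev q21 by rewrite Eq2; lnorm.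
    have := ov_PT WqR Wr UqrQ Eq1' Eq2' WtR.
    rewrite !size_rev; apply; by apply: (uniq_sub Ut); cntlia.
  - have Eq1' : rev q2 = rev q22 ++ x2 :: rev q21 by rewrite Eq2; lnorm.
    have := ov_PT WqR WrR UqrQR Eq1' Eq2' WtR.
    rewrite !size_rev; apply; by apply: (uniq_sub Ut); cntlia.
  - by rewrite Eq2; szn; slia.
have Hsq : size q1 = size q11 + size q12 + 1 by rewrite Eq1; szn; slia.
have Hsr : size r2 = size r21 + size r22 + 1 by rewrite Er2; szn; slia.
have Htin : tin = [::].
  have [q21 [q22 Eq2]] := splitE x2q2.
  case: (PTs q21 q22 Eq2) => *.
  by apply/eqP; rewrite -size_eq0; apply/eqP; slia.
subst tin.
have E12 : e x1 x2 by move: Wt => /= /andP[].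
case: (eqVneq x2 x) => [Ex|nx].
- have [q21 [q22 Eq2]] := splitE x2q2.
  have Eq2x : q2 = q21 ++ x :: q22 by rewrite Eq2 Ex.
  have L1 := ov_L1 Wq Wr Uqr Eq2x Er2 Wk Uk.
  have F := ov_Fc Wq Wr Uqr Eq1 Er2 Wk Uk E12 Ex Eq2x.
  case: (PTs q21 q22 Eq2) => *; slia.
- have [m1 [m2 [m3 [Eq2|Eq2]]]] := split2 x2q2 xq2 nx.
  + have Eq2a : q2 = m1 ++ x2 :: (m2 ++ x :: m3) by [].
    have Eq2x : q2 = (m1 ++ x2 :: m2) ++ x :: m3 by rewrite Eq2; lnorm.
    have L1 := ov_L1 Wq Wr Uqr Eq2x Er2 Wk Uk.
    have F := ov_Fa Wq Wr Uqr Eq1 Er2 Wk Uk E12 Eq2.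
    case: (PTs _ _ Eq2a) => H1 H2 H3 H4 H5; move: H1 H2 H3 H4 H5 L1 F; szn; slia.
  + have Eq2a : q2 = (m1 ++ x :: m2) ++ x2 :: m3 by rewrite Eq2; lnorm.
    have Eq2x : q2 = m1 ++ x :: (m2 ++ x2 :: m3) by [].
    have L1 := ov_L1 Wq Wr Uqr Eq2x Er2 Wk Uk.
    have F := ov_Fb Wq Wr Uqr Eq1 Er2 Wk Uk E12 Eq2.
    case: (PTs _ _ Eq2a) => H1 H2 H3 H4 H5; move: H1 H2 H3 H4 H5 L1 F; szn; slia.
Qed.

Lemma ov_i_y u q1 q2 r1 r2 x y k x1 x2 tin :
  walk (q1 ++ u :: q2) -> walk (r1 ++ u :: r2) -> uniq (q1 ++ u :: q2 ++ r1 ++ r2) ->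
  p.-1 <= size q1 + size q2 -> p.-1 <= size r1 + size r2 ->
  x \in q2 -> y \in r1 ++ r2 -> walk (x :: rcons k y) -> uniq (k ++ q1 ++ u :: q2 ++ r1 ++ r2) ->
  x1 \in q1 -> x2 \in q2 -> walk (x1 :: rcons tin x2) -> uniq (tin ++ q1 ++ u :: q2 ++ r1 ++ r2) ->
  False.
Proof.
move=> Wq Wr Uqr Hq Hr xq2; rewrite mem_cat => /orP[yr1|yr2] Wk Uk x1q1 x2q2 Wt Ut.
- apply: (ov_i (r1 := rev r2) (r2 := rev r1) Wq (walk_revQ Wr) _ Hq _ xq2 _ Wk _ x1q1 x2q2 Wt).
  + by apply: (uniq_sub Uqr); cntlia.
  + by rewrite !size_rev addnC.
  + by rewrite mem_rev.
  + by apply: (uniq_sub Uk); cntlia.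
  + by apply: (uniq_sub Ut); cntlia.
- exact: (ov_i Wq Wr Uqr Hq Hr xq2 yr2 Wk Uk x1q1 x2q2 Wt Ut).
Qed.

Lemma ov_i_xy u q1 q2 r1 r2 x y k x1 x2 tin :
  walk (q1 ++ u :: q2) -> walk (r1 ++ u :: r2) -> uniq (q1 ++ u :: q2 ++ r1 ++ r2) ->
  p.-1 <= size q1 + size q2 -> p.-1 <= size r1 + size r2 ->
  x \in q1 ++ q2 -> y \in r1 ++ r2 -> walk (x :: rcons k y) -> uniq (k ++ q1 ++ u :: q2 ++ r1 ++ r2) ->
  x1 \in q1 -> x2 \in q2 -> walk (x1 :: rcons tin x2) -> uniq (tin ++ q1 ++ u :: q2 ++ r1 ++ r2) ->
  False.
Proof.
move=> Wq Wr Uqr Hq Hr; rewrite mem_cat => /orP[xq1|xq2] yr Wk Uk x1q1 x2q2 Wt Ut.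
- apply: (ov_i_y (q1 := rev q2) (q2 := rev q1) (walk_revQ Wq) Wr _ _ Hr _ yr Wk _ _ _ (walk_revK Wt)).
  + by apply: (uniq_sub Uqr); cntlia.
  + by rewrite !size_rev addnC.
  + by rewrite mem_rev.
  + by apply: (uniq_sub Uk); cntlia.
  + by rewrite mem_rev.
  + by rewrite mem_rev.
  + by apply: (uniq_sub Ut); cntlia.
- exact: (ov_i_y Wq Wr Uqr Hq Hr xq2 yr Wk Uk x1q1 x2q2 Wt Ut).
Qed.

Lemma ov_ii u q2 r1 r2 x y k :
  walk (u :: q2) -> walk (r1 ++ u :: r2) -> uniq (u :: q2 ++ r1 ++ r2) ->
  p.-1 <= size q2 -> p.-1 <= size r1 + size r2 -> r1 != [::] -> r2 != [::] ->
  x \in q2 -> y \in r1 ++ r2 -> walk (x :: rcons k y) -> uniq (k ++ u :: q2 ++ r1 ++ r2) ->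
  False.
Proof.
have core : forall q2 r1 r2 x y k, walk (u :: q2) -> walk (r1 ++ u :: r2) -> uniq (u :: q2 ++ r1 ++ r2) ->
  p.-1 <= size q2 -> p.-1 <= size r1 + size r2 -> r1 != [::] ->
  x \in q2 -> y \in r2 -> walk (x :: rcons k y) -> uniq (k ++ u :: q2 ++ r1 ++ r2) -> False.
  move=> q2' r1' r2' x' y' k' Wq Wr Uqr Hq Hr nr1 xq yr Wk Uk.
  have Wq' : walk ([::] ++ u :: q2') by [].
  have [q21 [q22 Eq2]] := splitE xq.
  have [r21 [r22 Er2]] := splitE yr.
  have L1 := ov_L1 Wq' Wr Uqr Eq2 Er2 Wk Uk.
  have L2 := ov_L2 Wq' Wr Uqr Eq2 Er2 Wk Uk.
  have : size q2' = size q21 + size q22 + 1 by rewrite Eq2; szn; slia.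
  have : size r2' = size r21 + size r22 + 1 by rewrite Er2; szn; slia.
  have : size r1' != 0 by rewrite size_eq0.
  move: L1 L2 Hq Hr; slia.
move=> Wq Wr Uqr Hq Hr nr1 nr2 xq; rewrite mem_cat => /orP[yr1|yr2] Wk Uk.
- apply: (core q2 (rev r2) (rev r1) x y k Wq (walk_revQ Wr)) => //.
  + by apply: (uniq_sub Uqr); cntlia.
  + by rewrite !size_rev addnC.
  + by rewrite -size_eq0 size_rev size_eq0.
  + by rewrite mem_rev.
  + by apply: (uniq_sub Uk); cntlia.
- exact: (core q2 r1 r2 x y k Wq Wr Uqr Hq Hr nr1 xq yr2 Wk Uk).
Qed.

Lemma ov_end u q2 r1 r2 :
  walk (u :: q2) -> walk (r1 ++ u :: r2) -> uniq (u :: q2 ++ r1 ++ r2) ->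
  p.-1 <= size q2 -> p.-1 <= size r1 + size r2 -> 3 <= p ->
  (exists x y k, [/\ x \in q2, y \in r1 ++ r2, walk (x :: rcons k y) & uniq (k ++ u :: q2 ++ r1 ++ r2)]) ->
  False.
Proof.
move=> Wq Wr Uqr Hq Hr p3 [x [y [k [xq yr Wk Uk]]]].
have Wq' : walk ([::] ++ u :: q2) by [].
case: (eqVneq r1 [::]) => [r10|nr1].
  subst r1; have := ov_F0 Wq' Wr Uqr; move: Hq Hr; slia.
case: (eqVneq r2 [::]) => [r20|nr2].
  subst r2; have := ov_F0 Wq' (walk_revQ Wr).
  have U : uniq ([::] ++ u :: q2 ++ rev [::] ++ rev r1) by apply: (uniq_sub Uqr); cntlia.
  move=> /(_ U); rewrite size_rev; move: Hq Hr; slia.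
exact: (ov_ii Wq Wr Uqr Hq Hr nr1 nr2 xq yr Wk Uk).
Qed.

Lemma ov_main u q1 q2 r1 r2 :
  walk (q1 ++ u :: q2) -> walk (r1 ++ u :: r2) -> uniq (q1 ++ u :: q2 ++ r1 ++ r2) ->
  p.-1 <= size q1 + size q2 -> p.-1 <= size r1 + size r2 -> 3 <= p ->
  (exists x y k, [/\ x \in q1 ++ q2, y \in r1 ++ r2, walk (x :: rcons k y)
     & uniq (k ++ q1 ++ u :: q2 ++ r1 ++ r2)]) ->
  (q1 != [::] -> q2 != [::] -> exists x1 x2 tin, [/\ x1 \in q1, x2 \in q2,
     walk (x1 :: rcons tin x2) & uniq (tin ++ q1 ++ u :: q2 ++ r1 ++ r2)]) ->
  False.
Proof.
move=> Wq Wr Uqr Hq Hr p3 [x [y [k [xq yr Wk Uk]]]] HT.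
case: (eqVneq q1 [::]) => [q10|nq1].
  subst q1; apply: (ov_end Wq Wr Uqr Hq Hr p3).
  by exists x, y, k.
case: (eqVneq q2 [::]) => [q20|nq2].
  subst q2; apply: (ov_end (q2 := rev q1) (walk_revQ Wq) Wr _ _ Hr p3).
  + by apply: (uniq_sub Uqr); cntlia.
  + by rewrite size_rev; move: Hq; rewrite /= addn0.
  exists x, y, k; split => //.
  + by rewrite mem_rev; rewrite cats0 in xq.
  + by apply: (uniq_sub Uk); cntlia.
have [x1 [x2 [tin [x1q x2q Wt Ut]]]] := HT nq1 nq2.
exact: (ov_i_xy Wq Wr Uqr Hq Hr xq yr Wk Uk x1q x2q Wt Ut).
Qed.

Definition rest (S : {set T}) : rel T := [rel x y | [&& e x y, x \in S & y \in S]].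
Definition conn (S : {set T}) := forall x y, x \in S -> y \in S -> connect (rest S) x y.
Definition good (S : {set T}) := forall s, is_gpath e s -> all (mem S) s -> plen s < p.-1.

Lemma path_rest_all S x s : path (rest S) x s -> all (mem S) s.
Proof. by elim: s x => //= y s IH x /andP[/and3P[_ _ ->] /IH]. Qed.

Lemma path_rest_e S x s : path (rest S) x s -> path e x s.
Proof. by apply: sub_path => a b /and3P[]. Qed.

Lemma path_del_all v x s : path (del_rel e v) x s -> all (fun w => w != v) s.
Proof. by elim: s x => //= y s IH x /andP[/and3P[_ _ ->] /IH]. Qed.

Lemma path_del_e v x s : path (del_rel e v) x s -> path e x s.
Proof. by apply: sub_path => a b /and3P[]. Qed.

Hypothesis H2c : forall v x y, x != v -> y != v -> connect (del_rel e v) x y.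

Lemma nonnil_mem (s : seq T) : s != [::] -> exists z, z \in s.
Proof. by case: s => // z s _; exists z; rewrite mem_head. Qed.

Lemma mem_split (r1 r2 : seq T) u z : z \in r1 ++ r2 -> z \in r1 ++ u :: r2.
Proof. by rewrite !mem_cat inE => /orP[->|->]; rewrite ?orbT. Qed.

Lemma uniq_mid (r1 r2 : seq T) u : uniq (r1 ++ u :: r2) -> (u \notin r1 ++ r2) && uniq (r1 ++ r2).
Proof. by rewrite -cat1s uniq_catCA cat1s. Qed.

Lemma allin (S : {set T}) s z : all (mem S) s -> z \in s -> z \in S.
Proof. by move/allP/(_ z). Qed.

Lemma lemC (A : {set T}) u Q R : u \in A -> conn A -> conn (A :\ u) ->
  good (~: A) -> 3 <= p ->
  is_gpath e Q -> all (mem A) Q -> p.-1 <= plen Q ->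
  is_gpath e R -> all (mem (u |: ~: A)) R -> p.-1 <= plen R -> False.
Proof.
move=> uA cA cAu gB p3 GQ QA HQ GR RA HR.
move: (GQ) (GR); rewrite !gpathE => /andP[/andP[nQ WQ] UQ] /andP[/andP[nR WR] UR].
have uR : u \in R.
  apply/negPn/negP => uR.
  have : all (mem (~: A)) R.
    apply/allP => z zR; have := allP RA z zR; rewrite !inE.
    by case: eqP => [Ez|] //=; subst z; rewrite zR in uR.
  by move/(gB R GR); rewrite ltnNge HR.
have [r1 [r2 Er]] := splitE uR.
have Rnu : forall z, z \in r1 ++ r2 -> z \notin A.
  move=> z zr; have zR : z \in R by rewrite Er mem_split.
  have := allP RA z zR; rewrite !inE; case: eqP => //= Ez; subst z.
  by move: UR; rewrite Er => /uniq_mid; rewrite zr.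
have Hr12 : forall z, z \in r1 ++ r2 -> z \in R by move=> z zr; rewrite Er mem_split.
have /andP[nur Ur12] : (u \notin r1 ++ r2) && uniq (r1 ++ r2) by apply: uniq_mid; rewrite -Er.
have szR : plen R = size r1 + size r2 by rewrite /plen Er size_cat /= addnS.
have [z0 z0r] : exists z0, z0 \in r1 ++ r2.
  by apply: nonnil_mem; rewrite -size_eq0 size_cat; move: HR p3; rewrite szR; slia.
have z0u : z0 != u by apply/eqP => E; rewrite -E z0r in nur.
case: (boolP (u \in Q)) => uQ.
- have [q1 [q2 Eq]] := splitE uQ.
  have /andP[nuq Uq12] : (u \notin q1 ++ q2) && uniq (q1 ++ q2) by apply: uniq_mid; rewrite -Eq.
  have Hq12 : forall z, z \in q1 ++ q2 -> z \in A :\ u.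
    move=> z zq; have zA : z \in A by apply: (allin QA); rewrite Eq mem_split.
    by rewrite !inE zA andbT; apply/eqP => E; rewrite -E zq in nuq.
  have szQ : plen Q = size q1 + size q2 by rewrite /plen Eq size_cat /= addnS.
  have Dqr : forall z, z \in q1 ++ u :: q2 -> z \in r1 ++ r2 -> False.
    move=> z zq zr; have := Rnu z zr; by rewrite (allin QA) // Eq.
  have memt : forall z, z \in q1 ++ u :: q2 ++ r1 ++ r2 = [|| z == u, z \in q1 ++ q2 | z \in r1 ++ r2].
    by move=> z; rewrite !(mem_cat, inE); case: (z == u); case: (z \in q1); case: (z \in q2); case: (z \in r1).
  have Uqr : uniq (q1 ++ u :: q2 ++ r1 ++ r2).
    have -> : q1 ++ u :: q2 ++ r1 ++ r2 = (q1 ++ u :: q2) ++ (r1 ++ r2) by lnorm.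
    apply: uniq_catI => //; first by rewrite -Eq.
  have [x0 x0q] : exists x0, x0 \in q1 ++ q2.
    by apply: nonnil_mem; rewrite -size_eq0 size_cat; move: HQ p3; rewrite szQ; slia.
  have x0u : x0 != u by apply/eqP => E; rewrite -E x0q in nuq.
  apply: (ov_main (u := u) (q1 := q1) (q2 := q2) (r1 := r1) (r2 := r2)) => //.
  + by rewrite -Eq.
  + by rewrite -Er.
  + by rewrite -szQ.
  + by rewrite -szR.
  + have [x [y [k [Xx Zy Pk Uk Hk]]]] := CL (r := del_rel e u)
       (X := fun z => z \in q1 ++ q2) (Z := fun z => z \in r1 ++ r2) x0q z0r (H2c x0u z0u)
       (fun z zq zr => Dqr z (mem_split u zq) zr).
    exists x, y, k; split => //; first exact: path_del_e Pk.
    have ku := path_del_all Pk.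
    apply: uniq_catI => //.
      by move: Uk; rewrite /= rcons_uniq => /and3P[].
    move=> z zk; rewrite memt; have /andP[/negPf -> /negPf ->] := Hk z zk.
    by rewrite orbF (negPf (allP ku z _)) // mem_rcons inE zk orbT.
  + move=> nq1 nq2.
    have [a0 a0q] := nonnil_mem nq1.
    have [b0 b0q] := nonnil_mem nq2.
    have Hin : forall z, z \in q1 -> z \in q2 -> False.
      move=> z z1 z2; move: Uq12; rewrite cat_uniq => /and3P[_ /hasPn H _].
      by move: (H z z2); rewrite z1.
    have a0A : a0 \in A :\ u by apply: Hq12; rewrite mem_cat a0q.
    have b0A : b0 \in A :\ u by apply: Hq12; rewrite mem_cat b0q orbT.
    have [x1 [x2 [tin [Xx Zy Pk Uk Hk]]]] := CL (r := rest (A :\ u))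
       (X := fun z => z \in q1) (Z := fun z => z \in q2) a0q b0q (cAu a0 b0 a0A b0A) Hin.
    exists x1, x2, tin; split => //; first exact: path_rest_e Pk.
    have kA := path_rest_all Pk.
    apply: uniq_catI => //.
      by move: Uk; rewrite /= rcons_uniq => /and3P[].
    move=> z zk; rewrite memt; have /andP[/negPf z1 /negPf z2] := Hk z zk.
    have : z \in A :\ u by apply: (allP kA); rewrite mem_rcons inE zk orbT.
    rewrite !inE => /andP[zu zA].
    rewrite (negPf zu) mem_cat z1 z2 /= => /Rnu; by rewrite zA.
- have [x0 x0Q] := nonnil_mem nQ.
  have x0u : x0 != u by apply/eqP => E; rewrite -E x0Q in uQ.
  have x0A : x0 \in A by apply: (allin QA).
  have DQR : forall z, z \in Q -> z \in R -> False.
    move=> z zQ zR; have zA : z \in A by apply: (allin QA).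
    have := allin RA zR; rewrite !inE zA orbF => /eqP E; by rewrite -E zQ in uQ.
  have UQR : uniq (Q ++ R) by apply: uniq_catI.
  have D1 : forall z, z \in Q -> z == u -> False.
    by move=> z zQ /eqP zu; rewrite -zu zQ in uQ.
  have [x1 [y1 [k1 [Xx1 Zy1 Pk1 Uk1 Hk1]]]] := CL (r := rest A)
     (X := fun z => z \in Q) (Z := fun z => z == u) x0Q (eqxx u) (cA x0 u x0A uA) D1.
  have z0R : (z0 \in R) && (z0 != u) by rewrite z0u Hr12.
  have D2 : forall z, z \in Q -> (z \in R) && (z != u) -> False.
    by move=> z zQ /andP[zR _]; apply: (DQR z).
  have [x2 [y2 [k2 [Xx2 Zy2 Pk2 Uk2 Hk2]]]] := CL (r := del_rel e u)
     (X := fun z => z \in Q) (Z := fun z => (z \in R) && (z != u)) x0Q z0R (H2c x0u z0u) D2.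
  have y1R : y1 \in R by rewrite (eqP Zy1).
  case/andP: Zy2 => y2R y2u.
  have ny : y1 != y2 by rewrite (eqP Zy1) eq_sym.
  have U1 : uniq (k1 ++ Q ++ R).
    apply: uniq_catI => //; first by move: Uk1; rewrite /= rcons_uniq => /and3P[].
    move=> z zk; rewrite mem_cat; have /andP[/negPf -> zu] := Hk1 z zk.
    have zA : z \in A by apply: (allin (path_rest_all Pk1)); rewrite mem_rcons inE zk orbT.
    move=> /= zR; have := allin RA zR; rewrite !inE zA orbF; by move: zu => /negPf ->.
  have U2 : uniq (k2 ++ Q ++ R).
    apply: uniq_catI => //; first by move: Uk2; rewrite /= rcons_uniq => /and3P[].
    move=> z zk; rewrite mem_cat; have /andP[/negPf -> zR] := Hk2 z zk.
    have zu : z != u by apply: (allP (path_del_all Pk2)); rewrite mem_rcons inE zk orbT.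
    by rewrite zu andbT in zR; rewrite (negPf zR).
  have := sum_all WQ UQ WR UR DQR (path_rest_e Pk1) U1 (path_del_e Pk2) U2 Xx1 Xx2 y1R y2R ny.
  move: HQ HR p3; rewrite /plen; slia.
Qed.

Lemma set2_eq (x y a b : T) : e x y -> [set x; y] = [set a; b] ->
  (x = a /\ y = b) \/ (x = b /\ y = a).
Proof.
move=> exy E.
have xin : x \in [set a; b] by rewrite -E set21.
have yin : y \in [set a; b] by rewrite -E set22.
have ain : a \in [set x; y] by rewrite E set21.
have bin : b \in [set x; y] by rewrite E set22.
have nxy : x != y by apply/eqP => Exy; rewrite Exy eirr in exy.
case/set2P: xin => Ex; case/set2P: yin => Ey; subst.
- by rewrite eqxx in nxy.
- by left.
- by right.
- by rewrite eqxx in nxy.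
Qed.

Lemma cutP (X : {set T}) f : reflect (exists x y, [/\ e x y, f = [set x; y] & (x \in X) != (y \in X)])
  (f \in edge_cut e X).
Proof.
apply: (iffP idP).
  case/imset2P => x y xX; rewrite !inE => /andP[yX exy] ->.
  by exists x, y; split => //; rewrite xX (negPf yX).
case=> x [y [exy -> nX]].
case: (boolP (x \in X)) => xX.
  move: nX; rewrite xX /= => yX.
  by apply/imset2P; exists x y => //; rewrite !inE yX exy.
move: nX; rewrite (negPf xX) /= => yX.
apply/imset2P; exists y x => //.
- by move: yX; case: (y \in X).
- by rewrite !inE xX esym exy.
- by apply/setP => z; rewrite !inE orbC.
Qed.

Lemma in_cut (X : {set T}) x y : e x y -> ([set x; y] \in edge_cut e X) = ((x \in X) != (y \in X)).
Proof.
move=> exy; apply/cutP/idP => [[a [b [eab E nab]]]|H]; last by exists x, y.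
by case: (set2_eq exy E) => -[-> ->] //; rewrite eq_sym.
Qed.

Lemma rest_sym S : symmetric (rest S).
Proof. by move=> x y; rewrite /rest /= esym; case: (e y x); case: (x \in S); case: (y \in S). Qed.

Lemma conn_const (A X : {set T}) : conn A -> {subset edge_cut e X <= edge_cut e A} ->
  forall a b, a \in A -> b \in A -> (a \in X) = (b \in X).
Proof.
move=> cA sub a b aA bA; have /connectP[s Ps ->] := cA a b aA bA.
elim: s a aA Ps => //= c s IH a aA /andP[/and3P[eac _ cA'] Ps].
rewrite -(IH c cA' Ps); apply/eqP; apply/negPn/negP => neq.
have : [set a; c] \in edge_cut e A by apply: sub; rewrite in_cut.
by rewrite in_cut // aA cA'.
Qed.

Lemma compl_conn_const (A X : {set T}) : conn (~: A) -> {subset edge_cut e X <= edge_cut e A} ->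
  forall a b, a \notin A -> b \notin A -> (a \in X) = (b \in X).
Proof.
move=> cA sub a b aA bA.
apply: (conn_const (A := ~: A)) => //; last by rewrite inE.
  move=> f /sub /cutP [x [y [exy -> nxy]]]; apply/cutP; exists x, y; split => //.
  by rewrite !inE; move: nxy; case: (x \in A); case: (y \in A).
by rewrite inE.
Qed.

Hypothesis Hconn : forall x y, connect e x y.

Lemma k_nil (A : {set T}) (k : seq T) : (forall v, v \in k -> ~~ (v \in A) && ~~ (v \in ~: A)) -> k = [::].
Proof. by case: k => // v k /(_ v (mem_head _ _)); rewrite inE; case: (v \in A). Qed.

Lemma cross_edge (A : {set T}) a b : a \in A -> b \notin A -> exists x y, [/\ x \in A, y \notin A & e x y].
Proof.
move=> aA bA.
have D : forall v, (fun z => z \in A) v -> (fun z => z \in ~: A) v -> False by move=> v /= vA; rewrite inE vA.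
have bA' : (fun z => z \in ~: A) b by rewrite /= inE.
have [x [y [k [xA yA Pk _ Hk]]]] := CL aA bA' (Hconn a b) D.
rewrite (k_nil Hk) /= andbT in Pk.
exists x, y; split => //; have : y \in ~: A := yA; by rewrite inE.
Qed.

Lemma bond_of (A : {set T}) a b : a \in A -> b \notin A -> conn A -> conn (~: A) ->
  is_bond e (edge_cut e A).
Proof.
move=> aA bA cA cB; split; first by exists A.
split.
  have [x [y [xA yA exy]]] := cross_edge aA bA.
  by apply/set0Pn; exists [set x; y]; rewrite in_cut // xA (negPf yA).
move=> F' [X ->] nF sub.
have s1 := conn_const cA (subsetP sub).
have s2 := compl_conn_const cB (subsetP sub).
case: (eqVneq (a \in X) (b \in X)) => Hab.
  case/set0Pn: nF => f /cutP [x [y [exy _]]].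
  have Hz : forall z, (z \in X) = (a \in X).
    move=> z; case: (boolP (z \in A)) => zA; first exact: s1.
    by rewrite Hab; apply: s2.
  by rewrite (Hz x) (Hz y) eqxx.
apply/setP => f; apply/cutP/cutP => -[x [y [exy -> nxy]]]; exists x, y; split => //.
- move: nxy; case: (boolP (x \in A)) => xA; case: (boolP (y \in A)) => yA //.
  + by rewrite (s1 x y xA yA) eqxx.
  + by rewrite (s2 x y xA yA) eqxx.
- have Hz : forall z, (z \in X) = if z \in A then a \in X else b \in X.
    move=> z; case: (boolP (z \in A)) => zA; first exact: s1.
    exact: s2.
  rewrite (Hz x) (Hz y); move: nxy Hab.
  by case: (x \in A); case: (y \in A); case: (a \in X); case: (b \in X).
Qed.

Lemma side (A : {set T}) x s : path e x s -> ~~ meets (edge_cut e A) (x :: s) ->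
  all (fun z => (z \in A) == (x \in A)) s.
Proof.
elim: s x => //= y s IH x /andP[exy Ps].
rewrite /meets /path_edges /= negb_or => /andP[nin rest'].
have eq_xy : (y \in A) = (x \in A).
  by apply/eqP; move: nin; rewrite in_cut // negbK eq_sym.
rewrite eq_xy eqxx /=.
by have := IH y Ps rest'; rewrite eq_xy.
Qed.



Lemma conn_mono (S1 S2 : {set T}) x y : S1 \subset S2 -> connect (rest S1) x y -> connect (rest S2) x y.
Proof.
move=> /subsetP sub; apply: connect_sub => a b /and3P[eab aS bS].
by apply: connect1; rewrite /rest /= eab !sub.
Qed.

Lemma KL (S : {set T}) a b c : a \in S -> a != b -> a != c -> b != c -> connect (rest S) a c ->
  connect (rest (S :\ b)) a c \/ connect (rest (S :\ c)) a b.
Proof.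
move=> aS ab ac bc /connectP[s Ps Ec].
have aS' : a \in S :\ b :\ c by rewrite !inE ac ab aS.
have sub1 : S :\ b :\ c \subset S :\ b by apply/subsetP => z; rewrite !inE => /and3P[_ -> ->].
have sub2 : S :\ b :\ c \subset S :\ c by apply/subsetP => z; rewrite !inE => /and3P[-> _ ->].
suff aux : forall s x, x \in S :\ b :\ c -> connect (rest (S :\ b :\ c)) a x ->
    path (rest S) x s -> c = last x s ->
    connect (rest (S :\ b)) a c \/ connect (rest (S :\ c)) a b.
  exact: aux s a aS' (connect0 _ a) Ps Ec.
elim => [|y s' IH] x xS cx /=.
  by move=> _ Ec2; move: xS; rewrite Ec2 !inE eqxx.
case/andP => /and3P[exy xS0 yS] Ps' Ec2.
move: (xS); rewrite !inE => /and3P[xc xb _].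
case: (eqVneq y c) => [Eyc|yc].
  left; subst y; apply: connect_trans (conn_mono sub1 cx) (connect1 _).
  by rewrite /rest /= exy !inE xb xS0 eq_sym bc yS.
case: (eqVneq y b) => [Eyb|yb].
  right; subst y; apply: connect_trans (conn_mono sub2 cx) (connect1 _).
  by rewrite /rest /= exy !inE xc xS0 bc yS.
apply: (IH y) => //; first by rewrite !inE yc yb yS.
apply: connect_trans cx (connect1 _).
by rewrite /rest /= exy xS !inE yc yb yS.
Qed.

Lemma k_nilP (P : pred T) (k : seq T) : (forall v, v \in k -> ~~ P v && ~~ ~~ P v) -> k = [::].
Proof. by case: k => // v k /(_ v (mem_head _ _)); case: (P v). Qed.

Lemma cand (A : {set T}) b0 : conn A -> b0 \notin A -> 1 < #|A| ->
  exists u, [/\ u \in A, exists2 b, b \notin A & e u b, conn (A :\ u) & A :\ u != set0].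
Proof.
move=> cA b0A A1; have /card_gt1P [a1 [a2 [a1A a2A a12]]] := A1.
set N := [set v in A | [exists b, (b \notin A) && e v b]].
have [r [y [rA yA ery]]] := cross_edge a1A b0A.
have [a [aA ar]] : exists a, a \in A /\ a != r.
  case: (eqVneq a1 r) => [E|]; last by exists a1.
  by exists a2; split => //; rewrite -E eq_sym.
have b0r : b0 != r by apply/eqP => E; rewrite E rA in b0A.
have DA : forall v, (fun z => z \in A) v -> (fun z => z \in ~: A) v -> False.
  by move=> v /= vA; rewrite inE vA.
have b0A' : (fun z => z \in ~: A) b0 by rewrite /= inE.
have [v0 [z [k [v0A zA Pk _ Hk]]]] := CL aA b0A' (H2c ar b0r) DA.
rewrite (k_nil Hk) /= andbT in Pk; case/and3P: Pk => ev0z v0r _.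
have v0A' : v0 \in A := v0A.
have zA' : z \in ~: A := zA.
have v0N : v0 \in N :\ r.
  rewrite !inE v0r v0A' /=; apply/existsP; exists z; rewrite ev0z andbT.
  by move: zA'; rewrite inE.
set D := fun v => [set z in A :\ v | ~~ connect (rest (A :\ v)) r z].
case: (@arg_minnP _ v0 (fun v => v \in N :\ r) (fun v => #|D v|) v0N) => u uN Hmin.
move: (uN); rewrite !inE => /and3P[ur uA /existsP [bu /andP[buA ebu]]].
have rAu : r \in A :\ u by rewrite !inE eq_sym ur rA.
have D0 : D u = set0.
  apply/eqP; apply: contraT => /set0Pn [z0 z0D].
  have z0Au : z0 \in A :\ u by move: z0D; rewrite inE => /andP[].
  have z0u : z0 != u by move: z0Au; rewrite !inE => /andP[].
  have bu0 : bu != u by apply/eqP => E; rewrite E uA in buA.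
  have DD : forall v, (fun z => z \in D u) v -> (fun z => z \notin D u) v -> False.
    by move=> v /= ->.
  have buD : (fun z => z \notin D u) bu by rewrite /= inE negb_and !inE negb_and buA orbT.
  have [w [y1 [k1 [wD y1D Pk1 _ Hk1]]]] := CL (r := del_rel e u) z0D buD (H2c z0u bu0) DD.
  have k10 : k1 = [::] by exact: (k_nilP (P := fun z => z \in D u) Hk1).
  rewrite k10 /= andbT in Pk1; case/and3P: Pk1 => ewy wu yu.
  have wD' : w \in D u := wD.
  have /andP[wAu ncw] : (w \in A :\ u) && ~~ connect (rest (A :\ u)) r w by move: wD'; rewrite inE.
  have y1A : y1 \notin A.
    apply/negP => y1A.
    have y1Au : y1 \in A :\ u by rewrite !inE yu y1A.
    have : connect (rest (A :\ u)) r y1 by move: y1D; rewrite /= inE y1Au /= negbK.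
    move=> cy; move: ncw; rewrite (connect_trans cy (connect1 _)) //.
    by rewrite /rest /= esym ewy y1Au wAu.
  have wA : w \in A by move: wAu; rewrite !inE => /andP[].
  have wr : w != r by apply/eqP => E; move: ncw; rewrite E connect0.
  have wN : w \in N :\ r.
    by rewrite !inE wr wA /=; apply/existsP; exists y1; rewrite y1A ewy.
  have := Hmin w wN.
  suff : D w \proper D u by move/proper_card; rewrite ltnNge => /negP.
  apply/properP; split; last first.
    by exists w => //; rewrite !inE eqxx.
  apply/subsetP => z'; rewrite /D !inE => /andP[/andP[z'w z'A] ncz'].
  have z'r : z' != r by apply/eqP => E; move: ncz'; rewrite E connect0.
  have rw : r != w by rewrite eq_sym.
  have ru : r != u by rewrite eq_sym.
  have z'u : z' != u.
    apply/eqP => E; subst z'.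
    case: (KL rA rw ru wu (cA r u rA uA)) => H.
    - by rewrite H in ncz'.
    - by rewrite H in ncw.
  have ncu : ~~ connect (rest (A :\ u)) r z'.
    apply/negP => cz.
    have rz' : r != z' by rewrite eq_sym.
    have wz' : w != z' by rewrite eq_sym.
    case: (KL rAu rw rz' wz' cz) => H.
    - have : connect (rest (A :\ w)) r z'.
        by apply: conn_mono H; apply/subsetP => v; rewrite !inE => /and3P[-> _ ->].
      by rewrite (negPf ncz').
    - have : connect (rest (A :\ u)) r w.
        by apply: conn_mono H; apply/subsetP => v; rewrite !inE => /and3P[_ -> ->].
      by rewrite (negPf ncw).
  by rewrite z'u z'A ncu.
have cs := sym_connect_sym (rest_sym (A :\ u)).
have cr : forall x, x \in A :\ u -> connect (rest (A :\ u)) r x.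
  move=> x xA; have : x \notin D u by rewrite D0 inE.
  by rewrite /D inE xA /= negbK.
exists u; split => //.
- by exists bu.
- move=> x1 x2 x1A x2A; apply: connect_trans (cr x2 x2A).
  by rewrite cs; apply: cr.
- rewrite -card_gt0; have := cardsD1 u A; rewrite uA /=; move: A1; slia.
Qed.

Lemma exists_out (S : {set T}) : #|S| < #|T| -> exists w, w \notin S.
Proof.
move=> H; have : 0 < #|~: S| by move: H; rewrite [#|S|]cardsCs; slia.
by case/card_gt0P => w; rewrite inE => wS; exists w.
Qed.

Lemma p_ge3 : 3 < #|T| -> 3 <= p.
Proof.
move=> T4.
have [w0 _] : exists w : T, w \notin set0 by apply: exists_out; rewrite cards0; lia.
have [w1 w1x] : exists w, w \notin [set w0] by apply: exists_out; rewrite cards1; lia.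
have x0A : w0 \in [set w0] by rewrite inE.
have [x [y [xA yA exy]]] := cross_edge x0A w1x.
move: xA yA; rewrite !inE => /eqP Ex yx; subst x.
have [w2 w2n] : exists w, w \notin [set w0; y].
  by apply: exists_out; rewrite cards2; move: T4; case: (w0 != y) => /=; lia.
have yx' : y != w0 := yx.
have w2x : w2 != w0 by move: w2n; rewrite !inE negb_or => /andP[].
have D1 : forall v, (fun z => z \in [set y]) v -> (fun z => z \in ~: [set w0; y]) v -> False.
  by move=> v /=; rewrite !inE => /eqP ->; rewrite eqxx orbT.
have y1 : (fun z => z \in [set y]) y by rewrite /= inE.
have w2n' : (fun z => z \in ~: [set w0; y]) w2 by rewrite /= inE.
have [y' [z [k [y'y zn Pk _ Hk]]]] := CL y1 w2n' (H2c yx' w2x) D1.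
have k0 : k = [::].
  case: k Pk Hk => // v k' Pk /(_ v (mem_head _ _)).
  have := path_del_all Pk; rewrite /= => /andP[vx _].
  move=> /andP[H1 H2].
  have H1' : ~~ (v \in [set y]) := H1.
  have H2' : ~~ (v \in ~: [set w0; y]) := H2.
  by move: H1' H2'; rewrite !inE negb_or vx /= negbK => /negPf ->.
have y'y' : y' \in [set y] := y'y.
have zn' : z \in ~: [set w0; y] := zn.
subst k; move: y'y' zn' Pk; rewrite /= !inE negb_or andbT => /eqP -> /andP[zx zy] /and3P[eyz _ _].
have [w3 w3n] : exists w, w \notin [set w0; y; z].
  apply: exists_out; apply: leq_ltn_trans (leq_card_setU _ _) _.
  by rewrite cardsU1 !cards1; move: T4; case: (w0 \notin _) => /=; slia.
move: w3n; rewrite !inE !negb_or => /andP[/andP[w3x w3y] w3z].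
have D2 : forall v, (fun q => q \in ~: [set w0; y; z]) v -> (fun q => q \in [set w0; z]) v -> False.
  by move=> v /=; rewrite !inE !negb_or => /andP[/andP[/negPf -> _] /negPf ->].
have w3n' : (fun q => q \in ~: [set w0; y; z]) w3 by rewrite /= !inE !negb_or w3x w3y w3z.
have x2 : (fun q => q \in [set w0; z]) w0 by rewrite /= !inE eqxx.
have xy0 : w0 != y by rewrite eq_sym.
clear Hk.
have [w [t [k [wn tn Pk _ Hk]]]] := CL w3n' x2 (H2c w3y xy0) D2.
have k0 : k = [::].
  case: k Pk Hk => // v k' Pk /(_ v (mem_head _ _)).
  have := path_del_all Pk; rewrite /= => /andP[vy _].
  move=> /andP[H1 H2].
  have H1' : ~~ (v \in ~: [set w0; y; z]) := H1.
  have H2' : ~~ (v \in [set w0; z]) := H2.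
  by move: H1' H2'; rewrite !inE negbK (negPf vy) /=; case: (v == w0); case: (v == z).
have wn' : w \in ~: [set w0; y; z] := wn.
have tn' : t \in [set w0; z] := tn.
subst k; move: wn' tn' Pk; rewrite /= !inE !negb_or andbT => /andP[/andP[wx wy] wz] tn2 /and3P[ewt _ _].
have exy' : e w0 y := exy.
have n1 := negPf wx.
have n2 := negPf wy.
have n3 := negPf wz.
have n4 : (w0 == y) = false by rewrite eq_sym (negPf yx).
have n5 : (w0 == z) = false by rewrite eq_sym (negPf zx).
have n6 : (y == z) = false by rewrite eq_sym (negPf zy).
have n7 : (w0 == w) = false by rewrite eq_sym.
have n8 : (y == w) = false by rewrite eq_sym.
have n9 : (z == w) = false by rewrite eq_sym.
case/orP: tn2 => /eqP Et; subst t.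
- have := Hlong (s := [:: w; w0; y; z]).
  by rewrite /plen /= ewt exy' eyz !inE n1 n2 n3 n4 n5 n6; apply.
- have := Hlong (s := [:: w0; y; z; w]).
  by rewrite /plen /= exy' eyz esym ewt !inE n4 n5 n7 n6 n8 n9; apply.
Qed.

Lemma grow (p3 : 3 <= p) n : forall A : {set T}, #|A| <= n -> conn A -> conn (~: A) ->
  A != set0 -> ~: A != set0 -> good (~: A) ->
  exists A', [/\ conn A', conn (~: A'), A' != set0, ~: A' != set0 & good A' /\ good (~: A')].
Proof.
elim: n => [|n IH] A szA cA cB nA nB gB.
  by move: nA; rewrite -card_gt0; move: szA; slia.
case: (classic (good A)) => gA.
  by exists A; split.
have [s [Gs sA Ls]] : exists s, [/\ is_gpath e s, all (mem A) s & p.-1 <= plen s].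
  apply: NNPP => H; apply: gA => s Gs sA; rewrite ltnNge; apply/negP => Ls; apply: H; by exists s.
have A1 : 1 < #|A|.
  have Us : uniq s by move: Gs; rewrite gpathE => /andP[].
  have : size s <= #|A|.
    rewrite cardE; apply: uniq_leq_size => // z zs; rewrite mem_enum; exact: (allin sA zs).
  move: Ls p3; rewrite /plen; slia.
have [b0 b0B] := set0Pn _ nB.
have b0A : b0 \notin A by move: b0B; rewrite inE.
have [u [uA [bu buA ebu] cAu nAu]] := cand cA b0A A1.
have EB : ~: (A :\ u) = u |: ~: A by apply/setP => z; rewrite !inE negb_and negbK.
have cB' : conn (~: (A :\ u)).
  rewrite EB.
  have sub : ~: A \subset u |: ~: A by apply/subsetP => z zB; rewrite !inE; rewrite inE in zB; rewrite zB orbT.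
  have tob : forall x, x \in u |: ~: A -> connect (rest (u |: ~: A)) x bu.
    move=> x; rewrite !inE => /orP[/eqP ->|xB].
      by apply: connect1; rewrite /rest /= ebu !inE eqxx /= buA orbT.
    by apply: conn_mono sub _; apply: cB; rewrite inE.
  move=> x y xB yB; apply: connect_trans (tob x xB) _.
  by rewrite (sym_connect_sym (rest_sym _)); apply: tob.
have szA' : #|A :\ u| <= n by move: szA; rewrite (cardsD1 u A) uA; slia.
have nB' : ~: (A :\ u) != set0 by apply/set0Pn; exists u; rewrite !inE eqxx.
case: (classic (good (~: (A :\ u)))) => gB'.
  exact: (IH (A :\ u) szA' cAu cB' nAu nB' gB').
exfalso.
have [R [GR RA LR]] : exists R, [/\ is_gpath e R, all (mem (~: (A :\ u))) R & p.-1 <= plen R].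
  apply: NNPP => H; apply: gB' => R GR RA; rewrite ltnNge; apply/negP => LR; apply: H; by exists R.
rewrite EB in RA.
exact: (lemC uA cA cAu gB p3 Gs sA Ls GR RA LR).
Qed.

Lemma main_sec : 3 < #|T| ->
  exists F : {set {set T}}, is_bond e F /\
    forall s : seq T, is_gpath e s -> p.-1 <= plen s -> meets F s.
Proof.
move=> T4; have p3 := p_ge3 T4.
have [t _] : exists t : T, t \notin set0 by apply: exists_out; rewrite cards0; slia.
have [a0 a0t] : exists a, a \notin [set t] by apply: exists_out; rewrite cards1; slia.
set A0 := ~: [set t].
have cA0 : conn A0.
  move=> x y; rewrite !inE => xt yt.
  have E : del_rel e t =2 rest A0 by move=> a b; rewrite /rest /del_rel /= !inE.
  by rewrite -(eq_connect E); apply: H2c.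
have cB0 : conn (~: A0).
  move=> x y; rewrite setCK !inE => /eqP -> /eqP ->; exact: connect0.
have nA0 : A0 != set0 by apply/set0Pn; exists a0; rewrite inE.
have nB0 : ~: A0 != set0 by apply/set0Pn; exists t; rewrite setCK inE.
have gB0 : good (~: A0).
  move=> s Gs; rewrite setCK => sA.
  have Us : uniq s by move: Gs; rewrite gpathE => /andP[].
  have : size s <= #|[set t]|.
    rewrite cardE; apply: uniq_leq_size => // z zs; rewrite mem_enum; exact: (allin sA zs).
  rewrite cards1 /plen; move: p3; slia.
have [A [cA cB nA nB [gA gB]]] := grow p3 (leqnn _) cA0 cB0 nA0 nB0 gB0.
have [a aA] := set0Pn _ nA.
have [b bB] := set0Pn _ nB.
have bA : b \notin A by move: bB; rewrite inE.
exists (edge_cut e A); split; first exact: (bond_of aA bA cA cB).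
move=> [|x s] // Gs Ls; apply/negPn/negP => nm.
have Ps : path e x s by move: Gs => /= /andP[].
have := side Ps nm.
case: (boolP (x \in A)) => xA Hall.
- have : all (mem A) (x :: s).
    rewrite /= xA /=; apply/allP => z zs; by have /= /eqP := allP Hall z zs.
  by move/(gA _ Gs); rewrite ltnNge Ls.
- have : all (mem (~: A)) (x :: s).
    rewrite /= inE xA /=; apply/allP => z zs; rewrite /= inE; by have /= /eqP -> := allP Hall z zs.
  by move/(gB _ Gs); rewrite ltnNge Ls.
Qed.

End Main.


Theorem corollary1 (T : finType) (e : rel T) (p : nat) :
  symmetric e -> irreflexive e ->
  two_connected e -> 4 <= #|T| ->
  longest_path_length e p ->
  exists F : {set {set T}}, is_bond e F /\
    forall s : seq T, is_gpath e s -> p.-1 <= plen s -> meets F s.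
Proof.
move=> esym eirr [_ [Hc H2]] T4 [_ Hlong].
exact: (main_sec esym eirr Hlong H2 Hc T4).
Qed.
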